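(* Let $\mathbb{X}$ and $\mathbb{Y}$ be absolutely matrix ordered spaces and $\varphi:\mathbb{X}\to \mathbb{Y}$ a completely absolute value preserving map. Put $Ker(\varphi)=\lbrace x\in \mathbb{X}:\varphi(x)=0\rbrace.$ Then: (1) $\mathbb{M}_{l,m}(Ker(\varphi))=Ker(\varphi_{l,m})$ for every $l,m\in \mathbb{N}.$ (2) $Ker(\varphi_l)$ is self-adjoint for every $l\in \mathbb{N}.$ (3) $Ker(\varphi)$ is an absolute matrix order ideal of $\mathbb{X}.$ (4) $\varphi=0$ if and only if $Ker(\varphi)=\mathbb{X}$ if and only if $Ker(\varphi)^+=\mathbb{X}^+.$ Moreover, if $\mathbb{X}$ is an absolute matrix order unit space with order unit $e$, then (5) $\varphi=0$ if and only if $\varphi(e)=0.$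
   Context: An absolutely matrix ordered space is a matrix ordered space $(\mathbb{X},\{\mathbb{M}_m(\mathbb{X})^+\})$ with maps $\vert\cdot\vert_{l,m}:\mathbb{M}_{l,m}(\mathbb{X})\to\mathbb{M}_m(\mathbb{X})^+$ such that each $(\mathbb{M}_m(\mathbb{X})_{sa},\mathbb{M}_m(\mathbb{X})^+,\vert\cdot\vert_m)$ is an absolutely ordered space, $\vert\varsigma_1x\varsigma_2\vert\le\Vert\varsigma_1\Vert\,\vert\vert x\vert\varsigma_2\vert$ for scalar matrices $\varsigma_1,\varsigma_2$, and $\vert x\circledast y\vert=\vert x\vert\circledast\vert y\vert$. $\varphi_{l,m}:\mathbb{M}_{l,m}(\mathbb{X})\to\mathbb{M}_{l,m}(\mathbb{Y})$ denotes the entrywise amplification $[x_{i,j}]\mapsto[\varphi(x_{i,j})]$, $\varphi_l=\varphi_{l,l}$; $\varphi$ is completely absolute value preserving if it is linear and $\varphi_l(\vert x\vert_l)=\vert\varphi_l(x)\vert_l$ for all $x\in\mathbb{M}_l(\mathbb{X})$ and all $l$ (this implies $\varphi_l(x^* )=\varphi_l(x)^*$). A subspace $\mathbb{Z}\subseteq\mathbb{X}$ is an absolute matrix order ideal if, with $\mathbb{M}_l(\mathbb{Z})^+=\mathbb{M}_l(\mathbb{X})^+\cap\mathbb{M}_l(\mathbb{Z})$, each $\mathbb{M}_l(\mathbb{Z})_{sa}$ is an order ideal of $\mathbb{M}_l(\mathbb{X})_{sa}$ and $\vert\cdot\vert_{l,m}$ maps $\mathbb{M}_{l,m}(\mathbb{Z})$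 into $\mathbb{M}_m(\mathbb{Z})^+$. $Ker(\varphi)^+=Ker(\varphi)\cap\mathbb{X}^+$. *)

(* Defs.v *)
From mathcomp Require Import all_boot all_algebra.
From mathcomp Require Import all_classical all_reals.
From mathcomp Require Import complex.
Set Implicit Arguments. Unset Strict Implicit. Unset Printing Implicit Defensive.
Import GRing.Theory Num.Theory.
Local Open Scope ring_scope.
Local Open Scope complex_scope.
Local Open Scope classical_set_scope.

Section Defs.
Variable R : realType.
Local Notation C := R[i].

Definition cvnorm l (v : 'cV[C]_l) : R := Num.sqrt (\sum_i complex.Re (`|v i 0| ^+ 2)).

Definition opnorm n l (a : 'M[C]_(n, l)) : R :=
  sup [set r : R | exists v : 'cV[C]_l, cvnorm v <= 1 /\ r = cvnorm (a *m v)].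

Definition ctr n l (a : 'M[C]_(n, l)) : 'M[C]_(l, n) := (map_mx (fun z => z^*) a)^T.

Variable X : lmodType C.

Definition mscale l m (c : C) (x : 'M[X]_(l, m)) : 'M[X]_(l, m) := map_mx ( *:%R c) x.

Definition smx n l m r (a : 'M[C]_(n, l)) (x : 'M[X]_(l, m)) (b : 'M[C]_(m, r))
  : 'M[X]_(n, r) :=
  \matrix_(i, j) \sum_(k < l) \sum_(p < m) (a i k * b p j) *: x k p.

Definition dsum l m n r (x : 'M[X]_(l, m)) (y : 'M[X]_(n, r)) : 'M[X]_(l + n, m + r) :=
  block_mx x 0 0 y.

Definition mstar (s : X -> X) l m (x : 'M[X]_(l, m)) : 'M[X]_(m, l) :=
  \matrix_(i, j) s (x j i).

Definition selfadj (s : X -> X) m (v : 'M[X]_m) := mstar s v = v.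

Definition diagn (e : X) n : 'M[X]_n := \matrix_(i, j) if i == j then e else 0.

Definition Mset (Z : set X) l m : set 'M[X]_(l, m) := [set x | forall i j, Z (x i j)].

Definition is_star (s : X -> X) :=
  involutive s /\ forall (a : C) (x y : X), s (a *: x + y) = a^* *: s x + s y.

Record is_mos (s : X -> X) (P : forall m, 'M[X]_m -> Prop) : Prop := {
  mos_star : is_star s;
  mos_sa : forall m (v : 'M[X]_m), P m v -> selfadj s v;
  mos_add : forall m (u v : 'M[X]_m), P m u -> P m v -> P m (u + v);
  mos_scale : forall m (k : R) (v : 'M[X]_m), 0 <= k -> P m v -> P m (mscale k%:C v);
  mos_proper : forall m (v : 'M[X]_m), P m v -> P m (- v) -> v = 0;
  mos_conj : forall m n (a : 'M[C]_(m, n)) (v : 'M[X]_m), P m v -> P n (smx (ctr a) v a)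
}.

(* (V, V^+, |.|) is an absolutely ordered space, where V = M_m(X)_sa (a real
   ordered vector space), V^+ = P, |.| = A restricted to V;  u <= v  iff  P (v - u). *)
Record is_aos (s : X -> X) m (P : 'M[X]_m -> Prop) (A : 'M[X]_m -> 'M[X]_m) : Prop := {
  aos_a : forall v, P v -> A v = v;
  aos_b : forall v, selfadj s v -> P (A v + v) /\ P (A v - v);
  aos_c : forall (k : R) v, selfadj s v -> A (mscale k%:C v) = mscale `|k|%:C (A v);
  aos_d : forall u v w, selfadj s u -> selfadj s v -> selfadj s w ->
          A (u - v) = u + v -> P w -> P (v - w) -> A (u - w) = u + w;
  aos_e : forall u v w, selfadj s u -> selfadj s v -> selfadj s w ->
          A (u - v) = u + v -> A (u - w) = u + w ->
          A (u - A (v + w)) = u + A (v + w) /\ A (u - A (v - w)) = u + A (v - w)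
}.

Record is_amos (s : X -> X) (P : forall m, 'M[X]_m -> Prop)
    (A : forall l m, 'M[X]_(l, m) -> 'M[X]_m) : Prop := {
  amos_mos : is_mos s P;
  amos_pos : forall l m (x : 'M[X]_(l, m)), P m (A l m x);
  amos_aos : forall m, is_aos s (P m) (A m m);
  amos_mul : forall n l m r (a : 'M[C]_(n, l)) (x : 'M[X]_(l, m)) (b : 'M[C]_(m, r)),
    P r (mscale (opnorm a)%:C (A m r (smx 1%:M (A l m x) b)) - A n r (smx a x b));
  amos_dsum : forall l m n r (x : 'M[X]_(l, m)) (y : 'M[X]_(n, r)),
    A (l + n) (m + r) (dsum x y) = dsum (A l m x) (A n r y)
}.

Definition is_amous (s : X -> X) (P : forall m, 'M[X]_m -> Prop)
    (A : forall l m, 'M[X]_(l, m) -> 'M[X]_m) (e : X) : Prop :=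
  is_amos s P A /\
  forall n,
    (forall v : 'M[X]_n, selfadj s v ->
       exists k : R, 0 < k /\ P n (mscale k%:C (diagn e n) - v)) /\
    (forall v : 'M[X]_n, selfadj s v ->
       (forall k : R, 0 < k -> P n (v + mscale k%:C (diagn e n))) -> P n v).

Definition is_subspace (Z : set X) :=
  Z 0 /\ forall (a : C) (x y : X), Z x -> Z y -> Z (a *: x + y).

Definition is_amoi (s : X -> X) (P : forall m, 'M[X]_m -> Prop)
    (A : forall l m, 'M[X]_(l, m) -> 'M[X]_m) (Z : set X) : Prop :=
  is_subspace Z /\
  (forall l (u v : 'M[X]_l), Mset Z v -> selfadj s v ->
       P l u -> P l (v - u) -> Mset Z u /\ selfadj s u) /\
  (forall l m (x : 'M[X]_(l, m)), Mset Z x -> Mset Z (A l m x) /\ P m (A l m x)).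

Definition Xplus (P : forall m, 'M[X]_m -> Prop) : set X := [set x | P 1%N (const_mx x)].

End Defs.
Arguments Mset {R X} Z l m _.

Section Maps.
Variable R : realType.
Local Notation C := R[i].
Variables X Y : lmodType C.

Definition is_cavp (AX : forall l m, 'M[X]_(l, m) -> 'M[X]_m)
    (AY : forall l m, 'M[Y]_(l, m) -> 'M[Y]_m) (phi : X -> Y) : Prop :=
  (forall (a : C) (x y : X), phi (a *: x + y) = a *: phi x + phi y) /\
  forall l (x : 'M[X]_l), map_mx phi (AX l l x) = AY l l (map_mx phi x).

Definition Kernel (T : Type) (U : zmodType) (f : T -> U) : set T := [set x | f x = 0].

End Maps.

(* Main.v *)
Require Import Defs.
From mathcomp Require Import all_boot all_algebra.
From mathcomp Require Import all_classical all_reals.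
From mathcomp Require Import complex.
Import GRing.Theory Num.Theory.
Local Open Scope ring_scope.
Local Open Scope classical_set_scope.


Lemma lin_facts (R : realType) (X Y : lmodType R[i]) (phi : X -> Y)
  (h : forall a x y, phi (a *: x + y) = a *: phi x + phi y) :
  phi 0 = 0 /\ (forall x y, phi (x + y) = phi x + phi y) /\
  (forall a x, phi (a *: x) = a *: phi x).
Proof.
have D : forall x y, phi (x + y) = phi x + phi y.
  move=> x y. have := h 1 x y. by rewrite !scale1r.
have Z0 : phi 0 = 0.
  have := D 0 0; rewrite addr0 => /(congr1 (fun z => z - phi 0)).
  by rewrite subrr addrK.
split=> //; split=> // a x; by rewrite -[a *: x]addr0 h Z0 addr0.
Qed.

Lemma star_facts (R : realType) (X : lmodType R[i]) (s : X -> X) (h : is_star s) :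
  s 0 = 0 /\ (forall x y, s (x + y) = s x + s y) /\
  (forall a x, s (a *: x) = a^* *: s x).
Proof.
case: h => inv h.
have D : forall x y, s (x + y) = s x + s y.
  move=> x y. have := h 1 x y. by rewrite conjC1 !scale1r.
have Z0 : s 0 = 0.
  have := D 0 0; rewrite addr0 => /(congr1 (fun z => z - s 0)).
  by rewrite subrr addrK.
split=> //; split=> // a x; by rewrite -[a *: x]addr0 h Z0 addr0.
Qed.

Lemma half0 (R : realType) (Y : lmodType R[i]) (y : Y) : y + y = 0 -> y = 0.
Proof.
move=> h; have : (2%:R : R[i]) *: y = 0 by rewrite scaler_nat mulr2n.
by move/eqP; rewrite scaler_eq0 pnatr_eq0 /= => /eqP.
Qed.

Lemma mx11 (T : Type) (M : 'M[T]_1) : M = const_mx (M ord0 ord0).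
Proof. by apply/matrixP => i j; rewrite !ord1 mxE. Qed.

Lemma addsubsub {V : zmodType} (A B : V) : (A + B) - (A - B) = B + B.
Proof. by rewrite opprD opprK addrACA subrr add0r. Qed.

Lemma addaddsub {V : zmodType} (A B : V) : (A + B) + (A - B) = A + A.
Proof. by rewrite addrACA subrr addr0. Qed.

Local Open Scope classical_set_scope.

Theorem theorem3p8 (R : realType) (X Y : lmodType R[i])
  (sX : X -> X) (PX : forall m, 'M[X]_m -> Prop) (AX : forall l m, 'M[X]_(l, m) -> 'M[X]_m)
  (sY : Y -> Y) (PY : forall m, 'M[Y]_m -> Prop) (AY : forall l m, 'M[Y]_(l, m) -> 'M[Y]_m)
  (hX : is_amos sX PX AX) (hY : is_amos sY PY AY)
  (phi : X -> Y) (hphi : is_cavp AX AY phi) :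
  (* (1) *)
  (forall l m, Mset (Kernel phi) l m = Kernel (@map_mx _ _ phi l m)) /\
  (* (2) *)
  (forall l, [set mstar sX x | x in Kernel (@map_mx _ _ phi l l)]
             = Kernel (@map_mx _ _ phi l l)) /\
  (* (3) *)
  is_amoi sX PX AX (Kernel phi) /\
  (* (4) *)
  ((phi = (fun=> 0)) <-> Kernel phi = [set: X]) /\
  (Kernel phi = [set: X] <-> Kernel phi `&` Xplus PX = Xplus PX) /\
  (* (5) *)
  (forall e : X, is_amous sX PX AX e -> (phi = (fun=> 0) <-> phi e = 0)).
Proof.
case: hphi => hlin hA.
have [phi0 [phiD phiZ]] := @lin_facts R X Y phi hlin.
have phiN : forall x, phi (- x) = - phi x.
  by move=> x; rewrite -scaleN1r phiZ scaleN1r.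
have phiB : forall x y, phi (x - y) = phi x - phi y by move=> x y; rewrite phiD phiN.
have sXinv : involutive sX := (mos_star (amos_mos hX)).1.
have [sX0 [sXD sXZ]] := @star_facts R X sX (mos_star (amos_mos hX)).
have [sY0 [sYD sYZ]] := @star_facts R Y sY (mos_star (amos_mos hY)).
have sXN : forall y, sX (- y) = - sX y.
  by move=> y; rewrite -scaleN1r sXZ rmorphN1 scaleN1r.
have sYN : forall y, sY (- y) = - sY y.
  by move=> y; rewrite -scaleN1r sYZ rmorphN1 scaleN1r.
have mapB : forall l m (u v : 'M[X]_(l,m)), map_mx phi (u - v) = map_mx phi u - map_mx phi v.
  by move=> l m u v; apply/matrixP=> i j; rewrite !mxE phiB.
have map0 : forall l m, map_mx phi (0 : 'M[X]_(l,m)) = 0.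
  by move=> l m; apply/matrixP=> i j; rewrite !mxE phi0.
have ker_mx : forall l m (x : 'M[X]_(l,m)), Mset (Kernel phi) l m x <-> map_mx phi x = 0.
  move=> l m x; split.
  - by move=> h; apply/matrixP=> i j; rewrite !mxE; exact: h.
  - by move=> h i j; have := congr1 (fun M : 'M[Y]_(l,m) => M i j) h; rewrite !mxE.
have AY0 : forall n, AY n n 0 = 0.
  move=> n; have P0 : PY n 0.
    have := mos_scale (amos_mos hY) (k:=0) (v := AY n n 0) (ler0n R 0) (amos_pos hY (0 : 'M[Y]_(n,n))).
    suff -> : mscale (0:R)%:C%C (AY n n 0) = 0 by [].
    by apply/matrixP=> i j; rewrite !mxE scale0r.
  exact: (aos_a (amos_aos hY n) P0).
have posK : forall l (u : 'M[X]_l), PX l u -> PY l (map_mx phi u).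
  move=> l u Pu; rewrite -(aos_a (amos_aos hX l) Pu) hA; exact: (amos_pos hY (map_mx phi u)).
have core : forall l (u V : 'M[X]_l), PX l u -> PX l (V - u) -> map_mx phi V = 0 ->
    map_mx phi u = 0.
  move=> l u V Pu Pvu hV.
  have h1 := posK _ _ Pu; have h2 := posK _ _ Pvu; rewrite mapB hV sub0r in h2.
  exact: (mos_proper (amos_mos hY) h1 h2).
have sqA : forall p q (x : 'M[X]_(p,q)), p = q -> map_mx phi x = 0 ->
    map_mx phi (AX p q x) = 0.
  move=> p q x e; subst q => hx; rewrite hA hx; exact: AY0.
have kerA : forall l m (x : 'M[X]_(l,m)), map_mx phi x = 0 -> map_mx phi (AX l m x) = 0.
  move=> l m x hx.
  have := sqA _ _ (dsum x (0 : 'M[X]_(m,l))) (addnC l m).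
  rewrite /dsum map_block_mx hx !map0 block_mx0 (amos_dsum hX) /dsum map_block_mx.
  move=> /(_ erefl) /(congr1 ulsubmx); rewrite block_mxKul => ->.
  by apply/matrixP=> i j; rewrite !mxE.
have constsa : forall v, sX v = v -> selfadj sX (const_mx v : 'M[X]_1).
  by move=> v hv; apply/matrixP=> i j; rewrite !mxE hv.
have decomp : forall v, sX v = v ->
    exists a, PX 1%N (const_mx (a + v)) /\ PX 1%N (const_mx (a - v)).
  move=> v hv; have [P1 P2] := aos_b (amos_aos hX 1%N) (constsa v hv).
  exists (AX 1%N 1%N (const_mx v) ord0 ord0); split.
  - by move: P1; rewrite [X in PX _ X -> _]mx11 !mxE.
  - by move: P2; rewrite [X in PX _ X -> _]mx11 !mxE.
have posfix : forall y, PY 1%N (const_mx y) -> sY y = y.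
  move=> y Py; have := mos_sa (amos_mos hY) Py.
  by move=> /(congr1 (fun M : 'M[Y]_1 => M ord0 ord0)); rewrite !mxE.
have posK1 : forall v, PX 1%N (const_mx v) -> PY 1%N (const_mx (phi v)).
  by move=> v Pv; have := posK _ _ Pv; rewrite map_const_mx.
have saY : forall v, sX v = v -> sY (phi v) = phi v.
  move=> v hv; have [a [P1 P2]] := decomp v hv.
  have f1 := posfix _ (posK1 _ P1); have f2 := posfix _ (posK1 _ P2).
  rewrite phiD sYD in f1; rewrite phiB sYD sYN in f2.
  apply/eqP; rewrite -subr_eq0; apply/eqP; apply: half0.
  have := addsubsub (sY (phi a)) (sY (phi v)); rewrite f1 f2 addsubsub => e.
  by rewrite addrACA -opprD -e subrr.
have saparts : forall x, sX (x + sX x) = x + sX x /\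
    sX ('i *: (x - sX x)) = 'i *: (x - sX x).
  move=> x; split; first by rewrite sXD sXinv addrC.
  by rewrite sXZ sXD sXN sXinv conjCi scaleNr -scalerN opprB.
have kerstar : forall x, phi x = 0 -> phi (sX x) = 0.
  move=> x hx; have [h1 h2] := saparts x.
  have g1 := saY _ h1; have g2 := saY _ h2.
  rewrite phiD hx add0r in g1.
  rewrite phiZ phiB hx sub0r sYZ sYN g1 conjCi scaleNr scalerN opprK in g2.
  have : 'i *: phi (sX x) == 0.
    by apply/eqP; apply: half0; rewrite [X in _ + X]g2 subrr.
  by rewrite scaler_eq0 (negPf (neq0Ci _)) /= => /eqP.
have allzero : (forall v, PX 1%N (const_mx v) -> phi v = 0) -> forall x, phi x = 0.
  move=> H.
  have sa0 : forall v, sX v = v -> phi v = 0.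
    move=> v hv; have [a [P1 P2]] := decomp v hv.
    have f1 := H _ P1; have f2 := H _ P2; rewrite phiD in f1; rewrite phiB in f2.
    by apply: half0; rewrite -(addsubsub (phi a)) f1 f2 subrr.
  move=> x; have [h1 h2] := saparts x.
  have g1 := sa0 _ h1; have g2 := sa0 _ h2.
  rewrite phiD in g1; rewrite phiZ phiB in g2.
  have g3 : phi x - phi (sX x) = 0.
    by move/eqP: g2; rewrite scaler_eq0 (negPf (neq0Ci _)) /= => /eqP.
  by apply: half0; rewrite -(addaddsub _ (phi (sX x))) g1 g3 addr0.
split.
  by move=> l m; apply/funext => x; apply/propext; exact: ker_mx.
split.
  move=> l; apply/seteqP; split.
  - move=> _ [x hx <-]; rewrite /Kernel /=; apply/matrixP=> i j; rewrite !mxE.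
    apply: kerstar; have := congr1 (fun M : 'M[Y]_l => M j i) (hx : map_mx phi x = 0); rewrite !mxE; exact.
  - move=> x hx; exists (mstar sX x).
      rewrite /Kernel /=; apply/matrixP=> i j; rewrite !mxE.
      apply: kerstar; have := congr1 (fun M : 'M[Y]_l => M j i) (hx : map_mx phi x = 0); rewrite !mxE; exact.
    by apply/matrixP=> i j; rewrite !mxE sXinv.
split.
  split; [split|split].
  - exact: phi0.
  - by move=> a x y hx hy; rewrite /Kernel /= hlin hx hy scaler0 addr0.
  - move=> l u v hv _ Pu Pvu; split; last exact: (mos_sa (amos_mos hX) Pu).
    apply/ker_mx; apply: (core _ u v Pu Pvu); exact/ker_mx.
  - move=> l m x hx; split; last exact: (amos_pos hX x).
    apply/ker_mx; apply: kerA; exact/ker_mx.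
split.
  split.
  - by move=> ->; apply/seteqP; split=> x //=.
  - by move=> H; apply/funext=> x; have : Kernel phi x by rewrite H.
split.
  split.
  - by move=> ->; exact: setTI.
  - move=> H; apply/seteqP; split=> // x _; apply: allzero => v Pv.
    have : (Kernel phi `&` Xplus PX) v by rewrite H.
    by case.
move=> e [_ hu]; split; first by move=> ->.
move=> he; apply/funext => x; apply: allzero => v Pv.
have hsa := mos_sa (amos_mos hX) Pv.
have [k [k0 Pk]] := (hu 1%N).1 _ hsa.
have := core _ _ _ Pv Pk.
have -> : map_mx phi (mscale k%:C%C (diagn e 1)) = 0.
  apply/matrixP=> i j; rewrite !mxE; case: eqP => _; by rewrite phiZ ?he ?phi0 scaler0.
move=> /(_ erefl) /(congr1 (fun M : 'M[Y]_1 => M ord0 ord0)); by rewrite !mxE.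
Qed.
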